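(* Let $I=(G,T,k)$ be a Node Multiway Cut instance with $s=|T|\ge 2$ satisfying: (R1) no two terminals are adjacent and $p(I)\ge 0$; (R2) no vertex of $V\setminus T$ is adjacent to two distinct terminals; (R3) for every terminal $t$ and every neighbour $w\in V\setminus T$ of $t$, the optimum of the LP-relaxation of $I$ with the additional constraint $d_w=0$ is strictly larger than $LP(I)$. If $q(I)\ge \frac{s-2}{s-1}k$ or $q(I)\le 2p(I)$, then $I$ is a YES-instance.
   Context: A Node Multiway Cut instance $I=(G,T,k)$ consists of a simple undirected graph $G=(V,E)$, a set $T\subseteq V$ of terminals and an integer $k$; it is a YES-instance iff there is a set $X\subseteq V\setminus T$ with $|X|\le k$ such that every path in $G$ between two distinct terminals contains a vertex of $X$. Let $\mathcal P(I)$ be the set of all simple paths in $G$ connecting two distinct terminals. The LP-relaxation of $I$ is: minimize $\sum_{v\in V\setminus T} d_v$ subject to $\sum_{v\in V(P)\setminus T} d_v\ge 1$ for every $P\in\mathcal P(I)$ and $d_v\ge 0$ for all $v\in V\setminus T$. $LP(I)$ denotes its optimum value and $p(I)=k-LP(I)$. For $t\in T$, a separating cut of $t$ is a set $S\subseteq V\setminus T$ such that $t$ is disconnected from $T\setminus\{t\}$ in $G-S$; $m(I,t)$ is the minimum size of a separating cut of $t$, and $q(I)=k-\max_{t\in T}m(I,t)$. *)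

(* Defs.v *)
(* Node Multiway Cut: graph = symmetric irreflexive relation
   e on a finite vertex type V; terminals T : {set V}; LP values live in an
   arbitrary real (ordered) field R. *)
From HB Require Import structures.
From mathcomp Require Import all_boot all_order all_algebra.
Set Implicit Arguments. Unset Strict Implicit. Unset Printing Implicit Defensive.
Import Order.TTheory GRing.Theory Num.Theory.
Local Open Scope ring_scope.

Section NMC.
Variable V : finType.

Definition tpath (e : rel V) (T : {set V}) (p : seq V) : bool :=
  match p with
  | [::] => false
  | x :: r => [&& path e x r, uniq (x :: r), x \in T, last x r \in T
                  & x != last x r]
  end.

Definition nmc_yes (e : rel V) (T : {set V}) (k : nat) : Prop :=
  exists X : {set V}, [/\ X \subset ~: T, (#|X| <= k)%N &
    forall p, tpath e T p -> has (fun v => v \in X) p].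

Definition del_rel (e : rel V) (S : {set V}) : rel V :=
  [rel x y | [&& e x y, x \notin S & y \notin S]].

Definition sepcut (e : rel V) (T : {set V}) (t : V) (S : {set V}) : bool :=
  (S \subset ~: T) &&
  [forall u, ((u \in T) && (u != t)) ==> ~~ connect (del_rel e S) t u].

(* m(I,t): minimum size of a separating cut of t (default #|V| if none exists) *)
Definition mcut (e : rel V) (T : {set V}) (t : V) : nat :=
  \big[minn/#|V|]_(S : {set V} | sepcut e T t S) #|S|.

Definition maxm (e : rel V) (T : {set V}) : nat := \max_(t in T) mcut e T t.

Variable R : realFieldType.

(* feasible solutions of the LP relaxation (d is only relevant on V \ T) *)
Definition lp_feasible (e : rel V) (T : {set V}) (d : V -> R) : Prop :=
  (forall v, v \notin T -> 0 <= d v) /\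
  (forall p, tpath e T p -> 1 <= \sum_(v <- p | v \notin T) d v).

Definition lp_obj (T : {set V}) (d : V -> R) : R := \sum_(v | v \notin T) d v.

Definition is_min_val (P : (V -> R) -> Prop) (obj : (V -> R) -> R) (val : R) : Prop :=
  (exists d, P d /\ obj d = val) /\ (forall d, P d -> val <= obj d).

Definition LPopt (e : rel V) (T : {set V}) (lp : R) : Prop :=
  is_min_val (lp_feasible e T) (lp_obj T) lp.

Definition LPopt_fix0 (e : rel V) (T : {set V}) (w : V) (val : R) : Prop :=
  is_min_val (fun d => lp_feasible e T d /\ d w = 0) (lp_obj T) val.

End NMC.

(* Main.v *)
Require Import Defs.
From HB Require Import structures.
From mathcomp Require Import all_boot all_order all_algebra.
From mathcomp Require Import lra ring zify.
Set Implicit Arguments. Unset Strict Implicit. Unset Printing Implicit Defensive.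
Import Order.TTheory GRing.Theory Num.Theory.
Local Open Scope ring_scope.
Ltac splitmax := repeat match goal with
  | |- context [Order.min ?a ?b] => case: (leP a b) => ?
  end; repeat match goal with
  | |- context [Order.max ?a ?b] =>
     lazymatch b with context [Order.max _ _] => fail | _ => case: (leP a b) => ? end
  end.

Lemma len_split (R : realFieldType) (l r x z y : R) : x <= z -> z <= y ->
  Num.max 0 (Num.min r y - Num.max l x) =
  Num.max 0 (Num.min r z - Num.max l x) + Num.max 0 (Num.min r y - Num.max l z).
Proof.
move=> hxz hzy.
case: (leP l x) => h3; case: (leP l z) => h4;
case: (leP r y) => h1; case: (leP r z) => h2; splitmax; lra.
Qed.

Lemma len_const (R : realFieldType) (l r x y : R) : x < y ->
  ~~ ((x < l) && (l < y)) -> ~~ ((x < r) && (r < y)) ->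
  Num.max 0 (Num.min r y - Num.max l x) = (y - x) * ((l <= x) && (x < r))%:R.
Proof.
move=> hxy; rewrite !negb_and -!leNgt => hl hr.
case: (leP l x) => h1; case: (ltP x r) => h2 /=; rewrite ?mulr1n ?mulr0n ?mulr1 ?mulr0;
case/orP: hl => hl; case/orP: hr => hr; splitmax; lra.
Qed.

Lemma find_next (R : realFieldType) (E : seq R) x y : x < y ->
  exists c, [/\ x < c, c <= y, (c == y) || (c \in E) &
     forall p, p \in E -> ~~ ((x < p) && (p < c))].
Proof.
move=> hxy; elim: E => [|q E [c [h1 h2 h3 h4]]].
  by exists y; split => //; rewrite eqxx.
case: (boolP ((x < q) && (q < c))) => hq.
  case/andP: hq => hq1 hq2.
  exists q; split => //; first by apply: le_trans (ltW hq2) h2.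
    by rewrite inE eqxx orbT.
  move=> p; rewrite inE => /orP [/eqP -> |pE]; first by rewrite ltxx andbF.
  apply/negP => /andP [hp1 hp2].
  by move: (h4 p pE); rewrite hp1 (lt_trans hp2 hq2).
exists c; split => //.
  by case/orP: h3 => [->//|ce]; rewrite inE ce !orbT.
move=> p; rewrite inE => /orP [/eqP -> //|pE]; exact: h4.
Qed.

Lemma count_lt_strict (R : realFieldType) (E : seq R) x c : x < c -> c \in E ->
  (count (fun p => (c < p)%R) E < count (fun p => (x < p)%R) E)%N.
Proof.
move=> hxc; elim: E => [//|q E IH]; rewrite inE /= => /orP [/eqP <-| cE].
  rewrite ltxx hxc /= add0n add1n ltnS.
  apply: sub_count => p /= hp; exact: (lt_trans hxc hp).
have := IH cE; case: (ltP c q) => h /=.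
  by rewrite (lt_trans hxc h) /= !add1n ltnS.
by case: (x < q) => /=; rewrite ?add0n ?add1n // => /ltnW.
Qed.

Section Sweep.
Variables (R : realFieldType) (I : finType) (c l r : I -> R).
Hypothesis c_ge0 : forall j, 0 <= c j.

Definition Ustep (th : R) : R := \sum_j c j * ((l j <= th) && (th < r j))%:R.
Definition lenj (x y : R) (j : I) : R :=
  Num.max 0 (Num.min (r j) y - Num.max (l j) x).
Definition Lint (x y : R) : R := \sum_j c j * lenj x y j.

Definition endpts : seq R := [seq l j | j <- enum I] ++ [seq r j | j <- enum I].

Lemma Lint_split x z y : x <= z -> z <= y -> Lint x y = Lint x z + Lint z y.
Proof.
move=> h1 h2; rewrite /Lint -big_split /=; apply: eq_bigr => j _.
by rewrite -mulrDr /lenj (len_split _ _ h1 h2).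
Qed.

Lemma Lint_const x y : x < y -> (forall p, p \in endpts -> ~~ ((x < p) && (p < y))) ->
  Lint x y = (y - x) * Ustep x.
Proof.
move=> hxy hE; rewrite /Lint /Ustep mulr_sumr; apply: eq_bigr => j _.
rewrite /lenj len_const //; first by rewrite mulrCA.
  by apply: hE; rewrite mem_cat map_f ?mem_enum.
by apply: hE; rewrite mem_cat map_f ?mem_enum ?orbT.
Qed.

Lemma sweep x y : x < y -> exists th, [/\ x <= th, th < y & (y - x) * Ustep th <= Lint x y].
Proof.
move=> hxy.
move: {2}(count (fun p => x < p) endpts) (leqnn (count (fun p => x < p) endpts)) => n.
elim: n x hxy => [|n IH] x hxy hn;
have [c' [h1 h2 h3 h4]] := find_next endpts hxy;
(case: (boolP (c' == y)) => [/eqP ec|ney];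
  [exists x; split => //; rewrite Lint_const //; by rewrite ec in h4|]);
(have cE : c' \in endpts by move: h3; rewrite (negbTE ney));
have hcy : c' < y by rewrite lt_neqAle ney h2.
  by move: (count_lt_strict h1 cE); rewrite leqn0 in hn; rewrite (eqP hn).
have hn' := leq_trans (count_lt_strict h1 cE) hn; rewrite ltnS in hn'.
have [th [t1 t2 t3]] := IH c' hcy hn'.
case: (leP ((y - x) * Ustep x) (Lint x y)) => hx.
  by exists x.
exists th; split => //; first by apply: le_trans (ltW h1) t1.
move: hx; rewrite (Lint_split (ltW h1) h2) (Lint_const h1 h4) => hx.
have a0 : 0 < c' - x by rewrite subr_gt0.
have b0 : 0 < y - c' by rewrite subr_gt0.
have hU : Ustep th <= Ustep x.
  rewrite leNgt; apply/negP => hlt.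
  have : (y - c') * Ustep x < (y - c') * Ustep th by rewrite ltr_pM2l.
  nra.
nra.
Qed.
End Sweep.

Section BigMin.
Variables (R : realFieldType) (X : eqType).
Lemma bmin_le (r : seq X) (P : pred X) (F : X -> R) x0 i :
  i \in r -> P i -> \big[Num.min/x0]_(j <- r | P j) F j <= F i.
Proof.
elim: r => [//|a r IH]; rewrite inE big_cons => /orP [/eqP <- -> | ir Pi].
  by rewrite ge_min lexx.
case: (P a); last exact: IH.
by rewrite ge_min IH ?orbT.
Qed.
Lemma bmin_le0 (r : seq X) (P : pred X) (F : X -> R) x0 :
  \big[Num.min/x0]_(j <- r | P j) F j <= x0.
Proof.
elim: r => [|a r IH]; rewrite ?big_nil // big_cons.
by case: (P a) => //; rewrite ge_min IH orbT.
Qed.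
Lemma bmin_att (r : seq X) (P : pred X) (F : X -> R) x0 :
  \big[Num.min/x0]_(j <- r | P j) F j = x0 \/
  exists i, [/\ i \in r, P i & \big[Num.min/x0]_(j <- r | P j) F j = F i].
Proof.
elim: r => [|a r IH]; rewrite ?big_nil; first by left.
rewrite big_cons; case: (boolP (P a)) => Pa.
  case: (leP (F a) (\big[Num.min/x0]_(j <- r | P j) F j)) => h.
    by right; exists a; rewrite inE eqxx Pa.
  case: IH => [->|[i [ir Pi ->]]]; first by left.
  by right; exists i; rewrite inE ir orbT Pi.
case: IH => [->|[i [ir Pi ->]]]; first by left.
by right; exists i; rewrite inE ir orbT Pi.
Qed.
End BigMin.

Section Walks.
Variables (R : realFieldType) (V : finType) (e : rel V) (T : {set V}) (d : V -> R).
Hypothesis esym : symmetric e.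
Hypothesis eirr : irreflexive e.
Hypothesis d_ge0 : forall v, v \notin T -> 0 <= d v.
Hypothesis feas : forall p, tpath e T p -> 1 <= \sum_(v <- p | v \notin T) d v.

Definition wt (u : V) : R := if u \in T then 1 else d u.
Definition cost (t : V) (q : seq V) : R := \sum_(u <- q) wt u - wt (last t q).

Fixpoint allseq (n : nat) : seq (seq V) :=
  if n is n'.+1 then [::] :: [seq x :: s | x <- enum V, s <- allseq n'] else [:: [::]].

Definition A (t v : V) : R :=
  \big[Num.min/1]_(q <- allseq #|V| | path e t q && (last t q == v) && (q != [::])) cost t q.

Lemma wt_ge0 u : 0 <= wt u.
Proof. by rewrite /wt; case: ifP => h //; apply: d_ge0; rewrite h. Qed.

Lemma allseqP n s : (size s <= n)%N -> s \in allseq n.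
Proof.
elim: n s => [|n IH] [|x s] //=; rewrite ?inE ?eqxx // ltnS => hs.
apply/orP; right; apply/allpairsP; exists (x, s) => /=; split => //.
  by rewrite mem_enum.
exact: IH.
Qed.

Lemma sum_undup (p : seq V) : \sum_(u <- undup p) wt u <= \sum_(u <- p) wt u.
Proof.
elim: p => [|a p IH] //=; rewrite big_cons; case: ifP => _.
  by rewrite -[X in X <= _]add0r lerD ?wt_ge0.
by rewrite big_cons lerD.
Qed.

Lemma sum_sub (s p : seq V) : uniq s -> {subset s <= p} ->
  \sum_(u <- s) wt u <= \sum_(u <- p) wt u.
Proof.
move=> us sp; apply: le_trans (sum_undup p).
rewrite big_uniq // [X in _ <= X]big_uniq ?undup_uniq //.
rewrite [X in X <= _]big_mkcond [X in _ <= X]big_mkcond /=.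
apply: ler_sum => u _; case: ifP => h; first by rewrite mem_undup sp.
by case: ifP => _; rewrite ?wt_ge0.
Qed.

Lemma cost_rcons t q v : cost t (rcons q v) = \sum_(u <- q) wt u.
Proof. by rewrite /cost big_rcons /= last_rcons addrK. Qed.

Lemma cost_ge0 t q : q != [::] -> 0 <= cost t q.
Proof.
case/lastP: q => [//|q v] _; rewrite cost_rcons.
by apply: sumr_ge0 => u _; apply: wt_ge0.
Qed.

Lemma walk_lb t q : t \in T -> path e t q -> last t q \in T -> last t q != t ->
  1 <= cost t q.
Proof.
move=> tT hq; rewrite /cost; case: (shortenP hq) => p' hp' hu hsub lT lt.
apply: le_trans (_ : cost t p' <= _); last first.
  by rewrite /cost lerD2r; apply: sum_sub => //; case/andP: hu.
have tp : tpath e T (t :: p') by rewrite /tpath hp' hu tT lT eq_sym lt.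
apply: le_trans (feas tp) _.
rewrite big_cons tT /=.
case/lastP: p' hp' hu hsub lT lt tp => [|p'' v] _ _ _ lT lt _.
  by move: lt; rewrite /= eqxx.
rewrite cost_rcons big_rcons /= -cats1 last_cat /= in lT *.
rewrite lT addr0 big_mkcond /=; apply: ler_sum => u _.
by rewrite /wt; case: (u \in T) => /=; rewrite ?ler01 ?lexx.
Qed.

Lemma A_le t q : path e t q -> last t q != t -> A t (last t q) <= cost t q.
Proof.
move=> hq; rewrite [cost _ _]/cost; case: (shortenP hq) => p' hp' hu hsub lt.
apply: le_trans (_ : cost t p' <= _); last first.
  by rewrite /cost lerD2r; apply: sum_sub => //; case/andP: hu.
apply: bmin_le; last first.
  rewrite hp' eqxx /=; by case: p' {hp' hu hsub} lt => //=; rewrite eqxx.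
apply: allseqP; case/andP: hu => _ /card_uniqP <-; exact: max_card.
Qed.

Lemma A_le1 t v : A t v <= 1.
Proof. exact: bmin_le0. Qed.

Lemma A_att t v : A t v = 1 \/
  exists q, [/\ path e t q, last t q = v, q != [::] & A t v = cost t q].
Proof.
case: (bmin_att (allseq #|V|) (fun q => path e t q && (last t q == v) && (q != [::]))
   (cost t) 1) => [h|[q [_ /andP [/andP [h1 /eqP h2] h3] h4]]].
  by left.
by right; exists q.
Qed.

Lemma A_ge0 t v : 0 <= A t v.
Proof. by case: (A_att t v) => [->//|[q [_ _ h ->]]]; apply: cost_ge0. Qed.

Lemma A_nb t v : e t v -> A t v <= 0.
Proof.
move=> etv; have hq : path e t [:: v] by rewrite /= etv.
have vt : last t [:: v] != t by apply/eqP => /= vt; move: etv; rewrite vt eirr.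
by have := A_le hq vt; rewrite /cost /= big_seq1 subrr.
Qed.

Lemma A_edge t u v : e u v -> v != t -> A t v <= A t u + wt u.
Proof.
move=> euv vt; case: (A_att t u) => [->|[q [hq lq _ ->]]].
  by apply: le_trans (A_le1 t v) _; rewrite lerDl wt_ge0.
have hq' : path e t (rcons q v) by rewrite rcons_path hq lq euv.
have := A_le hq'; rewrite last_rcons cost_rcons => /(_ vt) h.
apply: le_trans h _; clear hq'; case/lastP: q hq lq => [|q' x] _ lq.
  by rewrite /cost /= big_nil sub0r; move: lq => /= <-; rewrite addNr.
by rewrite cost_rcons big_rcons /= -lq last_rcons.
Qed.

Lemma A_term t t' : t \in T -> t' \in T -> t' != t -> 1 <= A t t'.
Proof.
move=> tT t'T ne; case: (A_att t t') => [->//|[q [hq lq _ ->]]].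
by apply: walk_lb => //; rewrite lq.
Qed.

Lemma A_pair t t' v : t \in T -> t' \in T -> t != t' -> 1 <= A t v + wt v + A t' v.
Proof.
move=> tT t'T ne.
case: (A_att t v) => [->|[p [hp lp pn ->]]].
  by rewrite -addrA lerDl addr_ge0 ?wt_ge0 ?A_ge0.
case: (A_att t' v) => [->|[q [hq lq qn ->]]].
  by rewrite lerDr addr_ge0 ?wt_ge0 ?cost_ge0.
set s := q.
have hW : path e t (p ++ rev (belast t' s)).
  rewrite cat_path hp /= lp -lq rev_path.
  by rewrite (eq_path (e' := e)) // => a b; rewrite /= esym.
have lW : last t (p ++ rev (belast t' s)) = t'.
  rewrite last_cat /s; case: (q) qn => [|x q0] // _.
  have -> : belast t' (x :: q0) = t' :: belast x q0 by [].
  by rewrite rev_cons last_rcons.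
have := walk_lb tT hW; rewrite lW t'T eq_sym ne => /(_ isT isT).
rewrite /cost lW big_cat /= big_rev.
have -> : \sum_(u <- belast t' s) wt u = wt t' + \sum_(u <- s) wt u - wt (last t' s).
  rewrite /s; case: (q) qn => [//|x q0] _.
  rewrite /= big_cons -addrA; congr (_ + _).
  by rewrite lastI big_rcons /= addrK.
rewrite lp lq; lra.
Qed.

Lemma hit (f g : V -> R) th x r : path e x r -> f x <= th -> th < f (last x r) ->
  (forall a b, e a b -> b \in r -> f b <= f a + g a) ->
  exists u, [/\ u \in x :: r, f u <= th & th < f u + g u].
Proof.
elim: r x => [|y r IH] x /=; first by move=> _ h1 h2; move: (le_lt_trans h1 h2); rewrite ltxx.
move=> /andP [exy hr] hx hl hed.
case: (leP (f y) th) => hy.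
  have [u [h1 h2 h3]] := IH y hr hy hl (fun a b eab br => hed a b eab ltac:(by rewrite inE br orbT)).
  by exists u; rewrite inE h1 orbT.
exists x; rewrite inE eqxx; split => //.
by apply: lt_le_trans hy _; apply: hed => //; rewrite inE eqxx.
Qed.

Lemma thit th t r : 0 <= th -> th < 1 -> tpath e T (t :: r) ->
  exists u, [/\ u \in t :: r, u \notin T, A t u <= th & th < A t u + d u].
Proof.
move=> th0 th1 /and5P [hp hu tT lT ne].
case: r hp hu lT ne => [|x r] hp hu lT ne; first by move: ne; rewrite eqxx.
move: hp => /= /andP [etx hr].
have tr : t \notin x :: r by case/andP: hu.
have hed : forall a b, e a b -> b \in r -> A t b <= A t a + wt a.
  move=> a b eab br; apply: A_edge eab _; apply/eqP => bt; move: tr.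
  by rewrite -bt inE br orbT.
have ne' : last t (x :: r) != t by rewrite eq_sym.
have [u [h1 h2 h3]] := @hit (A t) wt th x r hr (le_trans (A_nb etx) th0)
  (lt_le_trans th1 (A_term tT lT ne')) hed.
have ut : u != t by apply/eqP => ut; move: tr; rewrite -ut h1.
have uT : u \notin T.
  apply/negP => uT; have := A_term tT uT ut => h.
  by move: (le_lt_trans (le_trans h h2) th1); rewrite ltxx.
exists u; split => //; first by rewrite inE h1 orbT.
by move: h3; rewrite /wt (negbTE uT).
Qed.

Lemma tpath_rev t r : tpath e T (t :: r) -> tpath e T (rev (t :: r)).
Proof.
move=> /and5P [hp hu tT lT ne].
have E : rev (t :: r) = last t r :: rev (belast t r) by rewrite lastI rev_rcons.
have hl : last (last t r) (rev (belast t r)) = t.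
  case: r {hp hu lT E} ne => [|x r] ne; first by move: ne; rewrite eqxx.
  have -> : belast t (x :: r) = t :: belast x r by [].
  by rewrite rev_cons last_rcons.
rewrite E /tpath hl tT lT -E rev_uniq hu eq_sym ne !andbT rev_path.
by rewrite (eq_path (e' := e)) // => a b; rewrite /= esym.
Qed.

Definition alpha v : R := \big[Num.min/1]_(t <- enum T) A t v.
Definition beta v : R :=
  \big[Num.min/1]_(t <- enum T) \big[Num.min/1]_(t' <- enum T | t' != t)
     Num.max (A t v) (A t' v).

Lemma alpha_le t v : t \in T -> alpha v <= A t v.
Proof. by move=> tT; apply: bmin_le; rewrite ?mem_enum. Qed.

Lemma alpha_att v : alpha v = 1 \/ exists2 t, t \in T & alpha v = A t v.
Proof.
case: (bmin_att (enum T) xpredT (fun t => A t v) 1) => [h|[t [h1 _ h2]]]; first by left.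
by right; exists t => //; move: h1; rewrite mem_enum.
Qed.

Lemma beta_le t t' v : t \in T -> t' \in T -> t' != t ->
  beta v <= Num.max (A t v) (A t' v).
Proof.
move=> tT t'T ne; apply: le_trans (_ : \big[Num.min/1]_(t'' <- enum T | t'' != t)
   Num.max (A t v) (A t'' v) <= _).
  by apply: (@bmin_le R V (enum T) xpredT (fun t => \big[Num.min/1]_(t'' <- enum T | t'' != t)
   Num.max (A t v) (A t'' v)) 1 t); rewrite ?mem_enum.
by apply: bmin_le; rewrite ?mem_enum.
Qed.

Lemma beta_att v : beta v = 1 \/ exists t t', [/\ t \in T, t' \in T, t' != t &
  beta v = Num.max (A t v) (A t' v)].
Proof.
case: (bmin_att (enum T) xpredT (fun t => \big[Num.min/1]_(t'' <- enum T | t'' != t)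
   Num.max (A t v) (A t'' v)) 1) => [h|[t [h1 _ h2]]]; first by left.
move: h2; rewrite /beta => ->.
case: (bmin_att (enum T) (fun t'' => t'' != t) (fun t'' => Num.max (A t v) (A t'' v)) 1)
  => [h|[t' [h3 h4 h5]]]; first by left.
by right; exists t, t'; move: h1 h3; rewrite !mem_enum => -> ->.
Qed.

Lemma alpha_ge0 v : 0 <= alpha v.
Proof. by case: (alpha_att v) => [->|[t _ ->]]; rewrite ?ler01 ?A_ge0. Qed.
Lemma alpha_le1 v : alpha v <= 1.
Proof. exact: bmin_le0. Qed.
Lemma beta_ge0 v : 0 <= beta v.
Proof.
case: (beta_att v) => [->|[t [t' [_ _ _ ->]]]]; rewrite ?ler01 //.
by rewrite le_max A_ge0.
Qed.
Lemma alpha_le_beta v : alpha v <= beta v.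
Proof.
case: (beta_att v) => [->|[t [t' [tT _ _ ->]]]]; first exact: alpha_le1.
by rewrite le_max alpha_le.
Qed.

Lemma pair_ab v : v \notin T -> beta v < 1 -> 1 <= alpha v + d v + beta v.
Proof.
move=> vT; case: (beta_att v) => [->|[t [t' [tT t'T ne ->]]]]; first by rewrite ltxx.
move=> _; case: (alpha_att v) => [->|[t0 t0T ->]].
  by rewrite -addrA lerDl addr_ge0 ?d_ge0 // le_max A_ge0.
have wv : wt v = d v by rewrite /wt (negbTE vT).
case: (eqVneq t0 t) => [->|ne0].
  have hne : t != t' by rewrite eq_sym.
  apply: le_trans (A_pair v tT t'T hne) _.
  by rewrite wv lerD2l le_max lexx orbT.
apply: le_trans (A_pair v t0T tT ne0) _.
by rewrite wv lerD2l le_max lexx.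
Qed.

Definition cc (p : V * bool) : R := if p.1 \in T then 0 else 2^-1.
Definition ll (p : V * bool) : R := if p.2 then beta p.1 else alpha p.1.
Definition rr (p : V * bool) : R := if p.2 then 1 else alpha p.1 + d p.1.
Definition yv th v : R := \sum_(b : bool) cc (v, b) * ((ll (v, b) <= th) && (th < rr (v, b)))%:R.

Lemma bR (b : bool) : (b%:R : R) = if b then 1 else 0.
Proof. by case: b. Qed.

Lemma yv_eq th v : v \notin T -> yv th v =
  2^-1 * ((beta v <= th) && (th < 1))%:R + 2^-1 * ((alpha v <= th) && (th < alpha v + d v))%:R.
Proof. by move=> vT; rewrite /yv big_bool /cc /ll /rr /= (negbTE vT). Qed.

Lemma yv_T th v : v \in T -> yv th v = 0.
Proof. by move=> vT; rewrite /yv big_bool /cc /= vT !mul0r addr0. Qed.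

Lemma yv_ge0 th v : 0 <= yv th v.
Proof.
case: (boolP (v \in T)) => vT; first by rewrite yv_T.
rewrite yv_eq // !bR; case: ifP => _; case: ifP => _; lra.
Qed.

Lemma yv_val th v : yv th v = 0 \/ 2^-1 <= yv th v.
Proof.
case: (boolP (v \in T)) => vT; first by left; rewrite yv_T.
rewrite yv_eq // !bR; case: ifP => _; case: ifP => _; [right|right|right|left]; lra.
Qed.

Lemma y_half th t v : 0 <= th -> th < 2^-1 -> v \notin T -> t \in T ->
  A t v <= th -> th < A t v + d v -> 2^-1 <= yv th v.
Proof.
move=> th0 th1 vT tT h1 h2; rewrite yv_eq // !bR.
have ha := alpha_le v tT.
case: (ltP th (alpha v + d v)) => h3.
  rewrite (le_trans ha h1) /=; case: ifP => _; lra.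
case: (alpha_att v) => [ea|[t0 t0T ea]]; first by lra.
case: (eqVneq t0 t) => [et|ne]; first by rewrite -et in h2; lra.
have hb := beta_le v tT t0T ne.
have : beta v <= th.
  apply: le_trans hb _; rewrite ge_max h1 /= -ea; exact: le_trans ha h1.
have th1' : th < 1 by lra.
move=> ->; rewrite th1' /=; case: ifP => _; lra.
Qed.

Lemma y_one th t t' v : 0 <= th -> th < 2^-1 -> v \notin T -> t \in T -> t' \in T ->
  t != t' -> A t v <= th -> th < A t v + d v -> A t' v <= th -> th < A t' v + d v ->
  yv th v = 1.
Proof.
move=> th0 th1 vT tT t'T ne h1 h2 h3 h4; rewrite yv_eq //.
have ha := alpha_le v tT.
have hb : beta v <= th.
  apply: le_trans (beta_le v tT t'T _) _; first by rewrite eq_sym.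
  by rewrite ge_max h1 h3.
have hd : th < alpha v + d v.
  have wv : wt v = d v by rewrite /wt (negbTE vT).
  case: (alpha_att v) => [ea|[t0 t0T ea]]; first by lra.
  case: (eqVneq t0 t) => [et|ne0]; first by rewrite ea et.
  have := A_pair v t0T tT ne0; rewrite wv -ea; lra.
rewrite hb (le_trans ha h1) hd /= (_ : th < 1) /=; last by lra.
rewrite mulr1n; lra.
Qed.

Lemma yv_feas th : 0 <= th -> th < 2^-1 -> lp_feasible e T (yv th).
Proof.
move=> th0 th1; split => [v _|p tp]; first exact: yv_ge0.
have th1' : th < 1 by lra.
case: p tp => [//|t r] tp.
have [u1 [u1p u1T h1 h2]] := thit th0 th1' tp.
have tp' := tpath_rev tp.
have E : rev (t :: r) = last t r :: rev (belast t r) by rewrite lastI rev_rcons.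
rewrite E in tp'.
have [u2 [u2p u2T h3 h4]] := thit th0 th1' tp'.
rewrite -E mem_rev in u2p.
move: tp => /and5P [_ hu tT lT ne].
rewrite big_mkcond /=.
have -> : \sum_(i <- t :: r) (if i \notin T then yv th i else 0) = \sum_(i <- t :: r) yv th i.
  by apply: eq_bigr => i _; case: ifP => // /negbFE /yv_T ->.
rewrite (bigD1_seq u1) //=.
case: (eqVneq u1 u2) => [eu|neu].
  rewrite -eu in h3 h4; rewrite (y_one th0 th1 u1T tT lT ne h1 h2 h3 h4).
  by rewrite lerDl sumr_ge0 // => i _; apply: yv_ge0.
rewrite big_mkcond (bigD1_seq u2) //= eq_sym neu.
have := y_half th0 th1 u1T tT h1 h2; have := y_half th0 th1 u2T lT h3 h4.
have : 0 <= \sum_(i <- t :: r | i != u2) (if i != u1 then yv th i else 0).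
  by apply: sumr_ge0 => i _; case: ifP => _; rewrite ?yv_ge0.
lra.
Qed.

Lemma lenA (a dd : R) : 0 <= a -> 0 <= dd ->
  Num.max 0 (Num.min (a + dd) (2^-1) - Num.max a 0) <= dd /\
  (a <= 2^-1 -> Num.max 0 (Num.min (a + dd) (2^-1) - Num.max a 0) <= 2^-1 - a).
Proof. move=> h1 h2; rewrite (_ : Num.max a 0 = a); last by rewrite max_l.
by split; [|move=> h3]; splitmax; lra.
Qed.

Lemma lenB (b : R) : 0 <= b ->
  Num.max 0 (Num.min 1 (2^-1) - Num.max b 0) = Num.max 0 (2^-1 - b).
Proof.
move=> h; rewrite (_ : Num.max b 0 = b); last by rewrite max_l.
by rewrite (_ : Num.min 1 (2^-1) = 2^-1 :> R) //; rewrite min_r //; lra.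
Qed.

Lemma len_bound v : v \notin T ->
  lenj ll rr 0 (2^-1) (v, true) + lenj ll rr 0 (2^-1) (v, false) <= d v.
Proof.
move=> vT; rewrite /lenj /ll /rr /= lenB ?beta_ge0 //.
have [hA1 hA2] := lenA (alpha_ge0 v) (d_ge0 vT).
have hab := alpha_le_beta v.
case: (leP (2^-1) (beta v)) => hb.
  rewrite (_ : Num.max 0 (2^-1 - beta v) = 0); first by rewrite add0r.
  by rewrite max_l //; lra.
have hb1 : beta v < 1 by lra.
have h1 := pair_ab vT hb1; have h2 := hA2 (le_trans hab (ltW hb)).
rewrite (_ : Num.max 0 (2^-1 - beta v) = 2^-1 - beta v); last by rewrite max_r //; lra.
move: h2; move: (Num.max 0 (Num.min (alpha v + d v) (2^-1) - Num.max (alpha v) 0)) => x.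
lra.
Qed.

Lemma yv_cost : exists th, [/\ 0 <= th, th < 2^-1 & lp_obj T (yv th) <= lp_obj T d].
Proof.
have c0 : forall p, 0 <= cc p by move=> p; rewrite /cc; case: ifP => _; lra.
have h12 : (0 : R) < 2^-1 by lra.
have [th [t0 t1 t2]] := sweep cc ll rr h12.
exists th; split => //.
have eU : Ustep cc ll rr th = lp_obj T (yv th).
  rewrite /Ustep /lp_obj /yv -(pair_bigA _ (fun v b => cc (v, b) * ((ll (v, b) <= th) && (th < rr (v, b)))%:R)) /=.
  rewrite [RHS]big_mkcond /=; apply: eq_bigr => v _.
  case: ifP => // /negbFE vT; rewrite big_bool /cc /= vT !mul0r; lra.
have eL : Lint cc ll rr 0 (2^-1) <= 2^-1 * lp_obj T d.
  rewrite /Lint /lp_obj -(pair_bigA _ (fun v b => cc (v, b) * lenj ll rr 0 (2^-1) (v, b))) /=.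
  rewrite mulr_sumr [X in _ <= X]big_mkcond /=; apply: ler_sum => v _.
  rewrite big_bool /cc /=; case: (boolP (v \in T)) => vT /=.
    by rewrite !mul0r addr0.
  rewrite -mulrDr ler_pM2l //; exact: len_bound.
move: t2; rewrite eU subr0; lra.
Qed.

Lemma rounding : exists y, [/\ lp_feasible e T y, lp_obj T y <= lp_obj T d &
  forall v, y v = 0 \/ 2^-1 <= y v].
Proof.
have [th [t0 t1 t2]] := yv_cost.
exists (yv th); split => //; first exact: yv_feas.
exact: yv_val.
Qed.
End Walks.

Local Close Scope ring_scope.
Section Comb.
Variables (V : finType) (e : rel V) (T : {set V}).
Hypothesis esym : symmetric e.
Hypothesis eirr : irreflexive e.
Hypothesis R1 : forall t1 t2, t1 \in T -> t2 \in T -> ~~ e t1 t2.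

Lemma path_del (S : {set V}) x r : path e x r -> all (fun v => v \notin S) (x :: r) ->
  path (del_rel e S) x r.
Proof.
elim: r x => [//|y r IH] x /= /andP [exy hr] /and3P [xS yS hall].
apply/andP; split; first by rewrite /del_rel /= exy xS yS.
by apply: IH => //=; rewrite yS.
Qed.

Lemma sepcut_hit t r S : tpath e T (t :: r) -> sepcut e T t S -> has (fun v => v \in S) (t :: r).
Proof.
move=> /and5P [hp hu tT lT ne] /andP [_ /forallP hS].
apply/negPn/negP; rewrite -all_predC => hall.
have := hS (last t r); rewrite lT eq_sym ne /= => /negP; apply.
apply/connectP; exists r => //; apply: path_del => //.
Qed.

Lemma sepcut_hit2 t r S : tpath e T (t :: r) ->
  sepcut e T t S \/ sepcut e T (last t r) S -> has (fun v => v \in S) (t :: r).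
Proof.
move=> tp [h|h]; first exact: sepcut_hit h.
have tp' := tpath_rev esym tp.
have E : rev (t :: r) = last t r :: rev (belast t r) by rewrite lastI rev_rcons.
rewrite E in tp'; rewrite -has_rev E; exact: sepcut_hit tp' h.
Qed.

Lemma sepcut_nbr t : t \in T -> sepcut e T t [set w | e t w].
Proof.
move=> tT; apply/andP; split.
  apply/subsetP => w; rewrite inE in_setC => etw; apply/negP => wT.
  by move: (R1 tT wT); rewrite etw.
apply/forallP => u; apply/implyP => /andP [uT ut]; apply/negP => /connectP [p hp ep].
case: p hp ep => [_ eu|x p]; first by move: ut; rewrite eu eqxx.
by rewrite /= /del_rel /= => /andP [/and3P [etx _]]; rewrite inE etx.
Qed.

Lemma sepcut_all t : t \in T -> sepcut e T t (~: T).
Proof.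
move=> tT; apply/andP; split; first exact: subxx.
apply/forallP => u; apply/implyP => /andP [uT ut]; apply/negP => /connectP [p hp ep].
case: p hp ep => [_ eu|x p]; first by move: ut; rewrite eu eqxx.
rewrite /= /del_rel /= !inE !negbK => /andP [/and3P [etx _ xT]].
by move: (R1 tT xT); rewrite etx.
Qed.

Lemma bminn_le (X : eqType) (r : seq X) (P : pred X) (F : X -> nat) x0 i :
  i \in r -> P i -> (\big[minn/x0]_(j <- r | P j) F j <= F i)%N.
Proof.
elim: r => [//|a r IH]; rewrite inE big_cons => /orP [/eqP <- -> | ir Pi].
  by rewrite geq_minl.
case: (P a); last exact: IH.
by apply: leq_trans (geq_minr _ _) (IH ir Pi).
Qed.

Lemma mcut_le t S : sepcut e T t S -> (mcut e T t <= #|S|)%N.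
Proof. by move=> h; apply: bminn_le => //; rewrite mem_index_enum. Qed.

Lemma mcut_ex t : t \in T -> exists S, sepcut e T t S && (#|S| <= mcut e T t)%N.
Proof.
move=> tT.
have : (mcut e T t = #|V|) \/ exists S, sepcut e T t S /\ mcut e T t = #|S|.
  rewrite /mcut; apply: (big_ind (fun n => n = #|V| \/ exists S, sepcut e T t S /\ n = #|S|)).
  - by left.
  - by move=> a b ha hb; rewrite /minn; case: ifP.
  - by move=> S hS; right; exists S.
case=> [->|[S [h1 ->]]]; last by exists S; rewrite h1 leqnn.
by exists (~: T); rewrite sepcut_all // max_card.
Qed.

End Comb.

Lemma card_bigcup_le (I T' : finType) (P : pred I) (F : I -> {set T'}) :
  (#|\bigcup_(i | P i) F i| <= \sum_(i | P i) #|F i|)%N.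
Proof.
elim/big_rec2: _ => [|i X n _ h]; first by rewrite cards0.
rewrite cardsU; apply: leq_trans (leq_subr _ _) _; by rewrite leq_add2l.
Qed.

Lemma endpoint_has (V : finType) (e : rel V) (T : {set V}) (a Q : pred V) t r :
  symmetric e -> tpath e T (t :: r) ->
  (forall t' r', tpath e T (t' :: r') -> Q t' -> has a (t' :: r')) ->
  Q t || Q (last t r) -> has a (t :: r).
Proof.
move=> esym tp H /orP [h|h]; first exact: H.
have tp' := tpath_rev esym tp.
have E : rev (t :: r) = last t r :: rev (belast t r) by rewrite lastI rev_rcons.
rewrite E in tp'; rewrite -has_rev E; exact: H tp' h.
Qed.

Local Open Scope ring_scope.
Unset Implicit Arguments.

Theorem mainTheorem6 (R : realFieldType) (V : finType) (e : rel V)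
  (T : {set V}) (k : nat) (lp : R) :
  symmetric e -> irreflexive e ->
  (2 <= #|T|)%N ->
  LPopt e T lp ->
  (* R1 *)
  (forall t1 t2, t1 \in T -> t2 \in T -> ~~ e t1 t2) ->
  0 <= k%:R - lp ->
  (* R2 *)
  (forall v t1 t2, v \notin T -> t1 \in T -> t2 \in T ->
     e v t1 -> e v t2 -> t1 = t2) ->
  (* R3 *)
  (forall t w, t \in T -> w \notin T -> e t w ->
     forall val, LPopt_fix0 e T w val -> lp < val) ->
  (* q(I) >= (s-2)/(s-1) k  or  q(I) <= 2 p(I) *)
  ((#|T| - 2)%N%:R / (#|T| - 1)%N%:R * k%:R <= k%:R - (maxm e T)%:R :> R
   \/ k%:R - (maxm e T)%:R <= 2 * (k%:R - lp) :> R) ->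
  nmc_yes e T k.
Proof.
move=> esym eirr hT [[d0 [fd0 od0]] hmin] R1 _ R2 R3 hq.
have [d_ge0 feas] := fd0.
have [y [fy oy yv]] := rounding esym eirr d_ge0 feas.
rewrite od0 in oy.
have ey : lp_obj T y = lp by apply/le_anti; rewrite oy hmin.
have NTb : forall w t, w \notin T -> t \in T -> e t w -> 2^-1 <= y w.
  move=> w t wT tT etw; case: (yv w) => // y0.
  have H : LPopt_fix0 e T w lp.
    split; first by exists y.
    by move=> d' [fd' _]; apply: hmin.
  by move: (R3 t w tT wT etw lp H); rewrite ltxx.
set NT := [set w | (w \notin T) && [exists t in T, e t w]].
have hNT : (#|NT|%:R * 2^-1 <= lp :> R).
  rewrite -ey /lp_obj.
  apply: le_trans (_ : \sum_(v in NT) y v <= _).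
    rewrite mulr_natl -sumr_const; apply: ler_sum => v.
    by rewrite inE => /andP [vT /existsP [t /andP [tT etv]]]; exact: NTb vT tT etv.
  rewrite [X in X <= _]big_mkcond [X in _ <= X]big_mkcond; apply: ler_sum => v _.
  case: (boolP (v \in NT)) => hv /=.
    by move: (hv); rewrite inE => /andP [-> _].
  by case: ifP => h //; apply: fy.1; rewrite h.
have hT0 : (0 < #|T|)%N by apply: leq_trans hT.
have [ts tsT eM] := eq_bigmax_cond (mcut e T) hT0.
have eM' : maxm e T = mcut e T ts by [].
case: hq => hq.
-
  have hk : ((#|T| - 1) * maxm e T <= k)%N.
    have e2 : ((#|T| - 2)%N%:R : R) = (#|T| - 1)%N%:R - 1.
      rewrite (_ : (#|T| - 2 = (#|T| - 1) - 1)%N); last lia.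
      by rewrite natrB //; lia.
    rewrite e2 in hq.
    have apos : (0 : R) < (#|T| - 1)%N%:R by rewrite ltr0n; lia.
    rewrite -(ler_nat R) natrM.
    rewrite -(ler_pM2l apos) in hq; move: hq.
    have -> : (#|T| - 1)%N%:R * (((#|T| - 1)%N%:R - 1) / (#|T| - 1)%N%:R * k%:R) =
             ((#|T| - 1)%N%:R - 1) * k%:R :> R.
      by field; rewrite lt0r_neq0.
    move=> h; nra.
  have [t0 t0T] : exists t0, t0 \in T by apply/card_gt0P.
  pose Sx t := odflt set0 [pick S | sepcut e T t S && (#|S| <= mcut e T t)%N].
  have hSx : forall t, t \in T -> sepcut e T t (Sx t) /\ (#|Sx t| <= maxm e T)%N.
    move=> t tT; rewrite /Sx; case: pickP => [S /andP [h1 h2] | h].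
      by split => //; apply: leq_trans h2 (leq_bigmax_cond _ tT).
    have [S hS] := mcut_ex R1 tT; by move: (h S); rewrite hS.
  exists (\bigcup_(t in T :\ t0) Sx t); split.
  + apply/bigcupsP => t /setD1P [_ tT]; by case/andP: (hSx t tT).1.
  + apply: leq_trans (card_bigcup_le _ _) _.
    apply: leq_trans (_ : (\sum_(t in T :\ t0) maxm e T <= _)%N).
      by apply: leq_sum => t /setD1P [_ tT]; exact: (hSx t tT).2.
    rewrite sum_nat_const; apply: leq_trans hk.
    by rewrite (cardsD1 t0 T) t0T add1n subn1 /=.
  + case=> [//|t r] tp.
    apply: (endpoint_has (Q := fun t' => t' != t0) esym tp).
      move=> t' r' tp' ne; have t'T : t' \in T by case/and5P: tp'.
      have := sepcut_hit tp' (hSx t' t'T).1; apply: sub_has => v hv.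
      by apply/bigcupP; exists t' => //; rewrite !inE ne.
    case/and5P: tp => _ _ _ _ ne; case: (eqVneq t t0) => //= et.
    by rewrite -et eq_sym.
-
  pose Nt := [set w | e ts w].
  have sub1 : Nt \subset NT.
    apply/subsetP => w; rewrite !inE => etw; apply/andP; split.
      by apply/negP => wT; move: (R1 _ _ tsT wT); rewrite etw.
    by apply/existsP; exists ts; rewrite tsT.
  have hm : (mcut e T ts <= #|Nt|)%N by apply: mcut_le; apply: sepcut_nbr.
  exists (NT :\: Nt); split.
  + by apply/subsetP => w; rewrite !inE => /andP [_ /andP [wT _]].
  + rewrite cardsD (setIidPr sub1) leq_subLR.
    have : (#|NT| <= k + maxm e T)%N.
      rewrite -(ler_nat R) natrD; lra.
    by move=> h; apply: leq_trans h _; rewrite addnC leq_add2r eM'.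
  + case=> [//|t r] tp.
    apply: (endpoint_has (a := fun v => v \in NT :\: Nt) (Q := fun t' => t' != ts) esym tp).
      move=> t' r' tp' ne; case/and5P: tp' => hp _ t'T lT ne'.
      case: r' hp lT ne' => [|x r'] hp lT ne'; first by move: ne'; rewrite eqxx.
      move: hp => /= /andP [etx _].
      have xT : x \notin T by apply/negP => xT; move: (R1 _ _ t'T xT); rewrite etx.
      apply/orP; right; apply/orP; left.
      rewrite !inE xT /=; apply/andP; split; last by apply/existsP; exists t'; rewrite t'T.
      apply/negP => etsx; move/eqP: ne; apply.
      by apply: (R2 x) => //; rewrite esym.
    case/and5P: tp => _ _ _ _ ne; case: (eqVneq t ts) => //= et.
    by rewrite -et eq_sym.
Qed.
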